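(* The statistics $(2\text{-}31)$ and $(13\text{-}2)$ are constant on every orbit of $\mathfrak{S}_n$ under the modified Foata–Strehl action.
   Context: For $\pi=a_1\cdots a_n\in\mathfrak{S}_n$: $(2\text{-}31)(\pi)$ is the number of pairs $1\le i<j\le n-1$ with $a_{j+1}<a_i<a_j$, and $(13\text{-}2)(\pi)$ is the number of pairs $2\le i<j\le n$ with $a_{i-1}<a_j<a_i$. Set $a_0=a_{n+1}=n+1$. A letter $a_k$ is a valley if $a_{k-1}>a_k<a_{k+1}$, a peak if $a_{k-1}<a_k>a_{k+1}$, a double ascent if $a_{k-1}<a_k<a_{k+1}$, a double descent if $a_{k-1}>a_k>a_{k+1}$. For $x\in[n]$: if $x$ is a double descent, $\varphi'_x(\pi)$ moves $x$ to between the first pair of consecutive letters $a_i,a_{i+1}$ to the right of $x$ with $a_i<x<a_{i+1}$; if a double ascent, to between the first pair $a_i,a_{i+1}$ to the left of $x$ with $a_i>x>a_{i+1}$; if a peak or valley, $\varphi'_x(\pi)=\pi$. The modified Foata–Strehl action is the $\mathbb{Z}_2^n$-action generated by the commuting involutions $\varphi'_x$, $x\in[n]$. *)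

(* Defs.v *)
(* Permutations of [n] are represented as words a_1 ... a_n
   (seq nat) that are rearrangements of 1..n. *)
From mathcomp Require Import all_boot.
Set Implicit Arguments. Unset Strict Implicit. Unset Printing Implicit Defensive.

Definition is_perm (n : nat) (s : seq nat) : bool := perm_eq s (iota 1 n).

(* Scan consecutive pairs (p, y) starting with previous letter p, inserting x
   between the first pair with p < x < y; at the end of the word the right
   letter is the sentinel n+1 (> x), so x is then placed at the end. *)
Fixpoint insR (x p : nat) (r : seq nat) : seq nat :=
  match r with
  | [::] => [:: x]
  | y :: r' => if (p < x) && (x < y) then x :: y :: r' else y :: insR x y r'
  end.

Definition ins_first (x : nat) (q : seq nat) : seq nat :=
  match q with
  | [::] => [:: x]
  | y :: q' => y :: insR x y q'
  end.

(* The modified Foata--Strehl involution phi'_x on a word s, with the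
   convention a_0 = a_{n+1} = n+1 where n = size s. *)
Definition phi' (x : nat) (s : seq nat) : seq nat :=
  let n := size s in
  let k := index x s in
  let l := take k s in
  let r := drop k.+1 s in
  let left := if l is [::] then n.+1 else last 0 l in
  let right := head n.+1 r in
  if (left > x) && (x > right) then
    (* double descent: move x right, into the first pair a_i < x < a_{i+1} *)
    l ++ ins_first x r
  else if (left < x) && (x < right) then
    (* double ascent: move x left, into the first pair a_i > x > a_{i+1}
       (scanning leftwards = scanning the reversed prefix rightwards) *)
    rev (ins_first x (rev l)) ++ r
  else s .

(* Orbits of the Z_2^n-action generated by the involutions phi'_x, x in [n]:
   the group elements are finite products of generators. *)
Inductive fs_orbit (n : nat) : seq nat -> seq nat -> Prop :=
  | fs_refl s : fs_orbit n s s
  | fs_step s t x : 1 <= x <= n -> fs_orbit n s t -> fs_orbit n s (phi' x t).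

(* (2-31)(pi): pairs 1 <= i < j <= n-1 with a_{j+1} < a_i < a_j
   (0-based indices below). *)
Definition stat_2_31 (s : seq nat) : nat :=
  \sum_(j < size s) \sum_(i < j)
     ((j.+1 < size s) && (nth 0 s j.+1 < nth 0 s i) && (nth 0 s i < nth 0 s j)).

(* (13-2)(pi): pairs 2 <= i < j <= n with a_{i-1} < a_j < a_i
   (0-based indices below). *)
Definition stat_13_2 (s : seq nat) : nat :=
  \sum_(j < size s) \sum_(i < j)
     ((0 < i) && (nth 0 s i.-1 < nth 0 s j) && (nth 0 s j < nth 0 s i)).

(* Main.v *)
Require Import Defs.
From mathcomp Require Import all_boot.
From mathcomp Require Import zify.
Set Implicit Arguments. Unset Strict Implicit. Unset Printing Implicit Defensive.

Definition cnt (a b : nat) (s : seq nat) : nat := \sum_(v <- s) ((a < v) && (v < b)).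

Fixpoint T (pre s : seq nat) : nat := match s with
 | c :: s' => match s' with d :: _ => cnt d c pre + T (rcons pre c) s' | [::] => 0 end
 | [::] => 0 end.

Fixpoint S2 (s : seq nat) : nat := match s with
 | c :: s' => match s' with d :: s'' => cnt c d s'' + S2 s' | [::] => 0 end
 | [::] => 0 end.

Lemma T_cons2 pre c d s : T pre (c :: d :: s) = cnt d c pre + T (rcons pre c) (d :: s).
Proof. by []. Qed.
Lemma T_one pre c : T pre [:: c] = 0.
Proof. by []. Qed.
Lemma S2_cons2 c d s : S2 (c :: d :: s) = cnt c d s + S2 (d :: s).
Proof. by []. Qed.
Lemma S2_one c : S2 [:: c] = 0.
Proof. by []. Qed.

Lemma cnt_cat a b s1 s2 : cnt a b (s1 ++ s2) = cnt a b s1 + cnt a b s2.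
Proof. by rewrite /cnt big_cat. Qed.
Lemma cnt_cons a b v s : cnt a b (v :: s) = ((a < v) && (v < b)) + cnt a b s.
Proof. by rewrite /cnt big_cons. Qed.
Lemma cnt_rcons a b v s : cnt a b (rcons s v) = cnt a b s + ((a < v) && (v < b)).
Proof. by rewrite -cats1 cnt_cat cnt_cons /cnt big_nil addn0. Qed.
Lemma cnt_nil a b : cnt a b [::] = 0.
Proof. by rewrite /cnt big_nil. Qed.
Lemma cnt_perm a b s1 s2 : perm_eq s1 s2 -> cnt a b s1 = cnt a b s2.
Proof. by move=> h; rewrite /cnt (perm_big _ h). Qed.
Lemma cnt0 a b s : b <= a.+1 -> cnt a b s = 0.
Proof.
move=> h; rewrite /cnt big1_seq // => v _.
by case: (ltnP a v) => h1 //=; case: (ltnP v b) => h2 //; lia.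
Qed.
Lemma cnt_split u x w s : u < x < w -> x \notin s ->
  cnt u w s = cnt u x s + cnt x w s.
Proof.
move=> /andP[h1 h2] hx; rewrite /cnt -big_split /=; apply: eq_big_seq => v hv.
have : v != x by apply: contraNneq hx => <-.
case: (ltngtP v x) => //= h _; lia.
Qed.

Lemma T_perm p1 p2 s : perm_eq p1 p2 -> T p1 s = T p2 s.
Proof.
elim: s p1 p2 => [|c [|d s] IH] p1 p2 h //.
rewrite !T_cons2 (cnt_perm _ _ h) (IH (rcons p1 c) (rcons p2 c)) //.
by rewrite -!cats1 perm_cat2r.
Qed.

Lemma sum_nth (F : nat -> nat) s : \sum_(j < size s) F (nth 0 s j) = \sum_(v <- s) F v.
Proof.
elim: s => [|v s IH]; first by rewrite big_ord0 big_nil.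
by rewrite big_ord_recl big_cons /= IH.
Qed.

Lemma T_stat pre s : T pre s = \sum_(j < size s) (((j.+1 < size s) * cnt (nth 0 s j.+1) (nth 0 s j) pre) + \sum_(i<j) ((j.+1 < size s) && (nth 0 s j.+1 < nth 0 s i) && (nth 0 s i < nth 0 s j))).
Proof.
elim: s pre => [|c [|d s] IH] pre.
- by rewrite big_ord0.
- by rewrite /= big_ord_recl !big_ord0.
rewrite T_cons2 IH.
move Es: (d :: s) => s'.
rewrite [RHS]big_ord_recl big_ord0 addn0.
congr (_ + _).
  by rewrite /= -Es mul1n.
apply: eq_bigr => j _.
rewrite [in RHS]big_ord_recl cnt_rcons /=.
have hb : bump 0 j = j.+1 by rewrite /bump leq0n add1n.
rewrite !add0n hb ltnS.
case: (j.+1 < size s') => /=; last by rewrite !mul0n.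
by rewrite !mul1n addnA.
Qed.

Lemma stat1E s : stat_2_31 s = T [::] s.
Proof.
rewrite T_stat /stat_2_31; apply: eq_bigr => j _.
by rewrite cnt_nil muln0.
Qed.

Lemma stat2_cons c s : stat_13_2 (c :: s) = stat_13_2 s +
  \sum_(j < size s) ((0 < j) && (c < nth 0 s j) && (nth 0 s j < nth 0 s 0)).
Proof.
rewrite /stat_13_2 /= big_ord_recl big_ord0 add0n -big_split /=.
apply: eq_bigr => j _.
rewrite big_ord_recl /= add0n.
case: (nat_of_ord j) => [|j']; first by rewrite !big_ord0.
rewrite big_ord_recl [in RHS]big_ord_recl /= add0n addnC.
by congr (_ + _).
Qed.

Lemma S2_stat s : S2 s = stat_13_2 s.
Proof.
elim: s => [|c [|d s] IH].
- by rewrite /stat_13_2 big_ord0.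
- by rewrite stat2_cons /stat_13_2 !big_ord0.
rewrite stat2_cons -IH S2_cons2 addnC; congr (_ + _).
rewrite big_ord_recl /= add0n. under eq_bigr do rewrite add0n. by rewrite /cnt -sum_nth.
Qed.

Definition Wc x (W : seq nat) := W = [::] \/ x < head 0 W.

Lemma perm_rr (Q : seq nat) a b : perm_eq (rcons (rcons Q a) b) (rcons (rcons Q b) a).
Proof. by rewrite -!cats1 -!catA perm_cat2l perm_catC. Qed.

Lemma T_K Q x U W : all (fun v => v < x) U -> Wc x W -> U != [::] ->
  T (rcons Q x) (U ++ W) = T Q (U ++ x :: W).
Proof.
elim: U Q => [|u [|u' U] IH] Q // /andP[hu hU] hW _.
- clear IH; rewrite !cat_cons !cat0s.
  case: hW => [->|hw]; first by rewrite T_one T_cons2 T_one cnt0 //; lia.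
  case: W hw => [|w W] // hw; rewrite /= in hw.
  rewrite !T_cons2 [cnt w u _]cnt0; last by lia.
  rewrite [cnt x u _]cnt0; last by lia.
  rewrite [cnt w x _]cnt0; last by lia.
  by rewrite (T_perm _ (perm_rr _ _ _)).
- rewrite !cat_cons !T_cons2 cnt_rcons.
  have -> : (u' < x < u) = false by apply/negbTE; case/andP: hU => h _; lia.
  rewrite addn0 (T_perm _ (perm_rr _ _ _)) IH //.
Qed.

Lemma T_base pre a L0 x U W : x < last a L0 -> x \notin pre ++ a :: L0 ->
  all (fun v => v < x) U -> U != [::] -> Wc x W ->
  T pre (a :: L0 ++ x :: U ++ W) = T pre (a :: L0 ++ U ++ x :: W).
Proof.
elim: L0 a pre => [|b L1 IH] a pre.
- move=> ha hx hU hU0 hW.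
  case: U hU hU0 => [|u U] // /andP[hu hU] _.
  have hUU : all (fun v => v < x) (u :: U) by rewrite /= hu.
  rewrite /= in ha.
  rewrite cat0s !cat_cons !T_cons2 -(@T_K (rcons pre a) x (u :: U) W hUU hW) //.
  rewrite cnt_rcons.
  have -> : (u < a < x) = false by apply/negbTE; lia.
  rewrite addn0 addnA [cnt u a pre](cnt_split (x:=x)).
  - by rewrite (addnC (cnt x a pre)).
  - by rewrite hu ha.
  - by apply: contra hx; rewrite mem_cat => ->.
- move=> ha hx hU hU0 hW.
  rewrite !cat_cons !T_cons2 IH //.
  by move: hx; rewrite !mem_cat mem_rcons !in_cons /=; apply: contra; case/orP=> [/orP[]|] ->; rewrite ?orbT.
Qed.

Lemma T_main L x U W : (L = [::] \/ x < last 0 L) -> x \notin L ->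
  all (fun v => v < x) U -> Wc x W ->
  T [::] (L ++ x :: U ++ W) = T [::] (L ++ U ++ x :: W).
Proof.
move=> hL hx hU hW.
case: U hU => [|u U] hU //.
case: L hL hx => [_ _|a L0 [//|hl] hx].
- rewrite cat0s cat_cons T_cons2 cnt_nil add0n.
  exact: (@T_K [::] x (u :: U) W hU hW).
- exact: T_base.
Qed.

Lemma S2_K x U W : all (fun v => v < x) U -> U != [::] -> Wc x W -> x \notin W ->
  S2 (U ++ W) = S2 (U ++ x :: W).
Proof.
elim: U => [|u [|u' U] IH] // /andP[hu hU] _ hW hxW.
- clear IH; rewrite !cat_cons !cat0s.
  case: W hW hxW => [_ _|w W [//|hw] hxW]; first by rewrite S2_one S2_cons2 S2_one cnt_nil.
  rewrite /= in hw.
  rewrite !S2_cons2 cnt_cons.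
  have -> : (u < w < x) = false by apply/negbTE; lia.
  rewrite add0n addnA -(cnt_split (x:=x)) //; first by rewrite hu.
  by apply: contra hxW; rewrite in_cons => ->; rewrite orbT.
- rewrite !cat_cons !S2_cons2 !cnt_cat cnt_cons.
  have -> : (u < x < u') = false by apply/negbTE; case/andP: hU => h _; lia.
  by rewrite add0n IH.
Qed.

Lemma S2_main L x U W : (L = [::] \/ x < last 0 L) -> x \notin W ->
  all (fun v => v < x) U -> Wc x W ->
  S2 (L ++ x :: U ++ W) = S2 (L ++ U ++ x :: W).
Proof.
move=> hL hx hU hW.
case: U hU => [|u U] hU //.
elim: L hL => [_|c L IH hL].
- rewrite cat0s cat_cons S2_cons2 cnt0; last by case/andP: hU => h _; lia.
  rewrite add0n; exact: (@S2_K x (u :: U) W hU).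
case: L IH hL => [|d L] IH hL.
- case: hL => // hc; rewrite /= in hc.
  have e1 : S2 ([:: c] ++ x :: (u :: U) ++ W) = cnt c x ((u :: U) ++ W) + S2 (x :: (u :: U) ++ W) by [].
  have e2 : S2 ([:: c] ++ (u :: U) ++ x :: W) = cnt c u (U ++ x :: W) + S2 ((u :: U) ++ x :: W) by [].
  rewrite e1 e2 cnt0; last by lia.
  rewrite cnt0; last by case/andP: hU => h _; lia.
  by rewrite !add0n IH //; left.
- have e1 : S2 ((c :: d :: L) ++ x :: (u :: U) ++ W) = cnt c d (L ++ x :: (u :: U) ++ W) + S2 ((d :: L) ++ x :: (u :: U) ++ W) by [].
  have e2 : S2 ((c :: d :: L) ++ (u :: U) ++ x :: W) = cnt c d (L ++ (u :: U) ++ x :: W) + S2 ((d :: L) ++ (u :: U) ++ x :: W) by [].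
  rewrite e1 e2 IH; last by case: hL => [//|/= h]; right.
  congr (_ + _); apply: cnt_perm.
  by rewrite perm_cat2l -cat1s perm_catCA.
Qed.

Definition shape x (A B : seq nat) := exists L U W, A = L ++ x :: U ++ W /\ B = L ++ U ++ x :: W /\
  all (fun v => v < x) U /\ (L = [::] \/ x < last 0 L) /\ Wc x W /\ x \notin L /\ x \notin W.

Lemma shape_stat x A B : shape x A B ->
  [/\ stat_2_31 A = stat_2_31 B, stat_13_2 A = stat_13_2 B & perm_eq A B].
Proof.
case=> [L [U [W [-> [-> [hU [hL [hW [hxL hxW]]]]]]]]].
rewrite !stat1E -!S2_stat T_main // S2_main //; split=> //.
by rewrite perm_cat2l -cat1s perm_catCA.
Qed.

Lemma insR_dec x p r : p < x -> x \notin r -> exists U W, r = U ++ W /\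
  insR x p r = U ++ x :: W /\ all (fun v => v < x) U /\ Wc x W.
Proof.
elim: r p => [|y r IH] p hp hx.
  by exists [::], [::]; split=> //; split=> //; split=> //; left.
rewrite /= hp /=.
have hyx : y != x by apply: contraNneq hx => ->; rewrite in_cons eqxx.
have hxr : x \notin r by apply: contra hx; rewrite in_cons => ->; rewrite orbT.
case: (ltnP x y) => hxy.
  by exists [::], (y :: r); split=> //; split=> //; split=> //; right.
have hyx' : y < x by rewrite ltn_neqAle hyx hxy.
have [U [W [e1 [e2 [hU hW]]]]] := IH y hyx' hxr.
exists (y :: U), W; split; first by rewrite e1.
by split; [rewrite e2 | split; [rewrite /= hyx' | ]].
Qed.

Lemma phi'_cases x s : uniq s -> x \in s -> x <= size s ->
  phi' x s = s \/ shape x s (phi' x s) \/ shape x (phi' x s) s.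
Proof.
move=> hu hx; case/splitPr: hx hu => l r hu hxs.
have [hxl hxr] : x \notin l /\ x \notin r.
  by move: hu; rewrite cat_uniq /= => /and3P[_ /norP[? _] /andP[? _]].
have hi : index x (l ++ x :: r) = size l by rewrite index_cat (negbTE hxl) /= eqxx addn0.
have hd : drop (size l).+1 (l ++ x :: r) = r.
  by rewrite drop_cat ltnNge leqnSn /= subSnn /= drop0.
rewrite /phi'; cbv zeta; rewrite hi take_size_cat // hd.
have hxN : x < (size (l ++ x :: r)).+1 by rewrite ltnS.
case: ifP => [/andP[hlt hgt] | hDD].
  right; left.
  clear hu hxs hd hi.
  case: r hxr hgt hxN hlt => [|u0 r'] hxr hgt hxN hlt.
    by move: (ltn_trans hgt hxN); rewrite ltnn.
  rewrite /= in hgt.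
  have hxr' : x \notin r' by apply: contra hxr; rewrite in_cons => ->; rewrite orbT.
  have [U [W [er [ei [hU hW]]]]] := insR_dec hgt hxr'.
  exists l, (u0 :: U), W; split; first by rewrite er.
  split; first by rewrite /ins_first ei.
  split; first by rewrite /= hgt hU.
  split; first by clear hxN; case: l hlt {hxl} => [|a l] hlt; [left | right].
  split=> //; split=> //.
  by apply: contra hxr; rewrite er in_cons mem_cat => ->; rewrite !orbT.
case: ifP => [/andP[hlt hgt] | hDA]; last by left.
right; right.
clear hu hxs hd hi hDD.
have hWr : Wc x r.
  by case: r hgt hxN hlt {hxr} => [|y r] hgt hxN hlt; [left | right].
case/lastP: l hxl hlt hxN {hgt} => [|l0 a0] hxl hlt hxN.
  by move: (ltn_trans hxN hlt); rewrite ltnn.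
have ha : (if rcons l0 a0 is [::] then (size (rcons l0 a0 ++ x :: r)).+1 else last 0 (rcons l0 a0)) = a0.
  by case E : (rcons l0 a0) => [|y ys]; [move/(congr1 size): E; rewrite size_rcons | rewrite -E last_rcons].
rewrite ha in hlt.
have hxl0 : x \notin rev l0 by rewrite mem_rev; apply: contra hxl; rewrite mem_rcons in_cons => ->; rewrite orbT.
have [U [W [er [ei [hU hW]]]]] := insR_dec hlt hxl0.
have el0 : l0 = rev W ++ rev U by rewrite -rev_cat -er revK.
rewrite rev_rcons /= ei.
exists (rev W), (rcons (rev U) a0), r; split.
  by rewrite rev_cons rev_cat rev_cons -!cats1 -!catA.
split; first by rewrite el0 -!cats1 -!catA.
split; first by rewrite all_rcons hlt all_rev.
split.
  case: W hW {er ei el0} => [|w W] hW; [by left | right].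
  by rewrite rev_cons last_rcons; case: hW.
split=> //; split=> //.
by apply: contra hxl; rewrite mem_rcons el0 in_cons mem_cat mem_rev => ->; rewrite orbT.
Qed.

Lemma orbit_inv n s t : fs_orbit n s t -> is_perm n s ->
  is_perm n t /\ stat_2_31 t = stat_2_31 s /\ stat_13_2 t = stat_13_2 s.
Proof.
elim=> [s0 | s0 t0 x hx ho IH] hp; first by [].
have [ht [e1 e2]] := IH hp.
have hu : uniq t0 by rewrite (perm_uniq ht) iota_uniq.
have hxt : x \in t0 by rewrite (perm_mem ht) mem_iota add1n ltnS.
have hsz : x <= size t0 by rewrite (perm_size ht) size_iota; case/andP: hx.
case: (phi'_cases hu hxt hsz) => [-> | [hs | hs]] //.
- case: (shape_stat hs) => f1 f2 hpm.
  split; first by rewrite /is_perm (perm_trans _ ht) // perm_sym.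
  by rewrite -f1 -f2.
- case: (shape_stat hs) => f1 f2 hpm.
  split; first by rewrite /is_perm (perm_trans hpm ht).
  by rewrite f1 f2.
Qed.

Theorem theorem5p1 (n : nat) (s t : seq nat) :
  is_perm n s -> fs_orbit n s t ->
  stat_2_31 t = stat_2_31 s /\ stat_13_2 t = stat_13_2 s.
Proof.
by move=> hp ho; case: (orbit_inv ho hp).
Qed.
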